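(* Let $G$ be an infinite group. Then (i) $Sc_G^{\wedge}=\operatorname{cl}\{\epsilon p: \epsilon\in G^*,\ \epsilon\epsilon=\epsilon,\ p\in\beta G\}$; (ii) $Sc_G^{\wedge}$ is an ideal of the semigroup $\beta G$, and $p\in Sc_G^{\wedge}$ if and only if every member of $p$ contains a piecewise shifted $FP$-set; (iii) $Sc_G^{\wedge}$ is the smallest closed ideal of $\beta G$ containing all idempotents of $G^*$.
   Context: $\beta G$ is the compact right topological semigroup of ultrafilters on discrete $G$ ($gp=\{gP:P\in p\}$; $pq$ generated by $\bigcup_{x\in P}xQ_x$, $P\in p$, $Q_x\in q$), $G^*$ the free ultrafilters, $X^*=\{p\in G^*:X\in p\}$. For $p\in G^*$, $\Delta_p(X)=\{gp:g\in G, X\in gp\}$. $A\subseteq G$ is scattered if for every infinite $X\subseteq A$ there is $p\in X^*$ with $\Delta_p(X)$ finite; $Sc_G$ is the ideal of scattered subsets, and $Sc_G^{\wedge}=\{p\in\beta G: G\setminus A\in p$ for each $A\in Sc_G\}$. Given an injective sequence $(g_n)$ and a sequence $(b_n)$ in $G$, the set $\{g_{i_1}\cdots g_{i_k}b_{i_k}: k\ge1, 0\le i_1<\dots<i_k<\omega\}$ is a piecewise shifted $FP$-set. *)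

(* Defs.v *)
From Stdlib Require Import List Sorting.Sorted Arith.
Import ListNotations.
Set Implicit Arguments.

Record Group := {
  gcar :> Type;
  gmul : gcar -> gcar -> gcar;
  gone : gcar;
  ginv : gcar -> gcar;
  gmul_assoc : forall x y z, gmul x (gmul y z) = gmul (gmul x y) z;
  gmul_1l : forall x, gmul gone x = x;
  gmul_Vl : forall x, gmul (ginv x) x = gone
}.

Section Defs.
Variable G : Group.

Definition gset := G -> Prop.
(* a "point" of betaG is a family of subsets of G (an ultrafilter when
   [ultrafilter p] holds) *)
Definition ufam := gset -> Prop.

Definition finite_set (A : gset) : Prop :=
  exists l : list G, forall x, A x -> In x l.

Definition infinite_group : Prop := ~ exists l : list G, forall x : G, In x l.

Definition ultrafilter (p : ufam) : Prop :=
  p (fun _ => True) /\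
  ~ p (fun _ => False) /\
  (forall A B : gset, p A -> (forall x, A x -> B x) -> p B) /\
  (forall A B : gset, p A -> p B -> p (fun x => A x /\ B x)) /\
  (forall A : gset, p A \/ p (fun x => ~ A x)).

Definition free (p : ufam) : Prop :=
  ultrafilter p /\ forall A, p A -> ~ finite_set A.

Definition star (X : gset) (p : ufam) : Prop := free p /\ p X.

Definition ueq (p q : ufam) : Prop := forall A, p A <-> q A.

Definition utrans (g : G) (p : ufam) : ufam :=
  fun A => exists P, p P /\ forall x, A x <-> exists y, P y /\ x = gmul G g y.

Definition uprod (p q : ufam) : ufam :=
  fun A => exists P : gset, p P /\
    exists Q : G -> gset, (forall x, P x -> q (Q x)) /\
      (forall x y, P x -> Q x y -> A (gmul G x y)).

(* Delta_p(X) = { gp : g in G, X in gp } is finite (up to equality of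
   ultrafilters) *)
Definition Delta_finite (p : ufam) (X : gset) : Prop :=
  exists l : list G, forall g : G, utrans g p X ->
    exists h, In h l /\ ueq (utrans g p) (utrans h p).

Definition scattered (A : gset) : Prop :=
  forall X : gset, (forall x, X x -> A x) -> ~ finite_set X ->
    exists p, star X p /\ Delta_finite p X.

Definition Sc_hat (p : ufam) : Prop :=
  ultrafilter p /\ forall A, scattered A -> p (fun x => ~ A x).

(* closure in betaG (basic open sets are {q : A in q}) *)
Definition ucl (S : ufam -> Prop) (p : ufam) : Prop :=
  ultrafilter p /\ forall A, p A -> exists q, S q /\ q A.

Definition uclosed (S : ufam -> Prop) : Prop :=
  (forall p, S p -> ultrafilter p) /\ forall p, ucl S p -> S p.

Definition uideal (S : ufam -> Prop) : Prop :=
  (forall p, S p -> ultrafilter p) /\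
  (exists p, S p) /\
  forall p q, S p -> ultrafilter q -> S (uprod p q) /\ S (uprod q p).

Definition idempotent (e : ufam) : Prop := ueq (uprod e e) e.

Definition idem_translates (q : ufam) : Prop :=
  exists e p, free e /\ idempotent e /\ ultrafilter p /\ ueq q (uprod e p).

Fixpoint gprodl (g : nat -> G) (l : list nat) : G :=
  match l with
  | [] => gone G
  | i :: l' => gmul G (g i) (gprodl g l')
  end.

Definition psFP (g b : nat -> G) : gset :=
  fun x => exists l : list nat, l <> [] /\ Sorted lt l /\
    x = gmul G (gprodl g l) (b (last l 0)).

Definition contains_psFP (A : gset) : Prop :=
  exists g b : nat -> G, (forall m n, g m = g n -> m = n) /\
    forall x, psFP g b x -> A x.

End Defs.

(* Main.v *)
Require Import Defs.
From Stdlib Require Import List Sorting.Sorted Arith Lia Classical ClassicalEpsilon FunctionalExtensionality PropExtensionality.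
From mathcomp Require ssreflect ssrbool boolp classical_sets.
Import ListNotations.
Set Implicit Arguments.
Unset Strict Implicit.
Module ZornWrap.
Import mathcomp.boot.ssreflect mathcomp.boot.ssrbool.

Lemma zornP (T : Type) (t0 : T) (R : T -> T -> Prop) :
 (forall t, R t t) -> (forall r s t, R r s -> R s t -> R r t) ->
 (forall A : T -> Prop, (forall s t, A s -> A t -> R s t \/ R t s) ->
    exists t, forall s, A s -> R s t) ->
 exists t, forall s, R t s -> R s t.
Proof.
move=> Hr Ht Hc.
have [||| t Ht'] := @classical_sets.ZL_preorder T t0 (fun a b => boolp.asbool (R a b)).
- by move=> t; apply/boolp.asboolP.
- by move=> r s t /boolp.asboolP h1 /boolp.asboolP h2; apply/boolp.asboolP; eauto.
- move=> A HA. have [|t At] := Hc A.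
    by move=> s u As Au; case: (HA s u As Au) => /boolp.asboolP; auto.
  by exists t => s As; apply/boolp.asboolP; auto.
exists t => s Rts. by apply/boolp.asboolP; apply: Ht'; apply/boolp.asboolP.
Qed.

End ZornWrap.
Import ZornWrap.

Section S.
Variable G : Group.
Local Notation "x ** y" := (gmul G x y) (at level 40, left associativity).
Local Notation one := (gone G).
Local Notation inv := (ginv G).
Implicit Types (p q r e : ufam G) (A B : gset G) (a g h x y : G).

Lemma mul_cancel_l (a x y : G) : a ** x = a ** y -> x = y.
Proof.
  intro H. rewrite <- (gmul_1l G x), <- (gmul_1l G y), <- (gmul_Vl G a).
  rewrite <- !gmul_assoc, H. reflexivity.
Qed.

Lemma mul_V_r (x : G) : x ** inv x = one.
Proof.
  apply (@mul_cancel_l (inv x)). rewrite gmul_assoc, gmul_Vl, gmul_1l.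
  apply (@mul_cancel_l (inv (inv x))). rewrite gmul_assoc, gmul_Vl, gmul_1l. reflexivity.
Qed.

Lemma mul_1r (x : G) : x ** one = x.
Proof. rewrite <- (gmul_Vl G x), gmul_assoc, mul_V_r, gmul_1l. reflexivity. Qed.

Lemma mul_cancel_r (a x y : G) : x ** a = y ** a -> x = y.
Proof.
  intro H. rewrite <- (mul_1r x), <- (mul_1r y), <- (mul_V_r a), !gmul_assoc, H.
  reflexivity.
Qed.

Lemma mul_K (a x : G) : a ** (inv a ** x) = x.
Proof. rewrite gmul_assoc, mul_V_r, gmul_1l. reflexivity. Qed.
Lemma mul_VK (a x : G) : inv a ** (a ** x) = x.
Proof. rewrite gmul_assoc, gmul_Vl, gmul_1l. reflexivity. Qed.

Lemma gset_ext (A B : gset G) : (forall x, A x <-> B x) -> A = B.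
Proof. intro H; apply functional_extensionality; intro x; apply propositional_extensionality; auto. Qed.

Lemma ueq_eq (p q : ufam G) : ueq p q -> p = q.
Proof. intro H; apply functional_extensionality; intro x; apply propositional_extensionality; auto. Qed.

Definition upc (p : ufam G) := forall A B : gset G, p A -> (forall x, A x -> B x) -> p B.

Section UF.
Variable p : ufam G.
Hypothesis Hp : ultrafilter p.

Lemma uf_up : upc p. Proof. destruct Hp as (_&_&H&_); exact H. Qed.
Lemma uf_upE A B : p A -> (forall x, A x -> B x) -> p B. Proof. apply uf_up. Qed.
Lemma uf_meet A B : p A -> p B -> p (fun x => A x /\ B x). Proof. destruct Hp as (_&_&_&H&_); apply H. Qed.
Lemma uf_em A : p A \/ p (fun x => ~ A x). Proof. destruct Hp as (_&_&_&_&H); apply H. Qed.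
Lemma uf_full : p (fun _ => True). Proof. destruct Hp as (H&_); apply H. Qed.
Lemma uf_nonempty A : p A -> exists x, A x.
Proof.
  intro HA. apply NNPP; intro N. apply (proj1 (proj2 Hp)).
  apply (uf_upE HA). intros x Ax; apply N; eauto.
Qed.
Lemma uf_not A : p A -> ~ p (fun x => ~ A x).
Proof.
  intros HA HN. destruct (uf_nonempty (uf_meet HA HN)) as [x [H1 H2]]; auto.
Qed.
Lemma uf_notE A : ~ p A -> p (fun x => ~ A x).
Proof. intro H; destruct (uf_em A); tauto. Qed.
Lemma uf_or A B : p (fun x => A x \/ B x) -> p A \/ p B.
Proof.
  intro H. destruct (uf_em A) as [|HA]; auto. destruct (uf_em B) as [|HB]; auto.
  exfalso. apply (uf_not H). apply (uf_upE (uf_meet HA HB)). intros x [] []; tauto.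
Qed.
Lemma uf_ext A B : p A -> (forall x, A x <-> B x) -> p B.
Proof. intros H E; apply (uf_upE H); firstorder. Qed.
Lemma uf_list (L : list G) : (forall x, In x L -> p (fun y => ~ y = x)) ->
   p (fun y => ~ In y L).
Proof.
  induction L as [|a L IH]; intro H.
  - apply (uf_upE uf_full); simpl; tauto.
  - assert (H1 : p (fun y => ~ In y L)) by (apply IH; intros; apply H; simpl; auto).
    assert (H2 := H a (or_introl eq_refl)).
    apply (uf_upE (uf_meet H2 H1)). simpl. intros y [h1 h2] [e|e]; auto.
Qed.
Lemma uf_biglist (T : Type) (L : list T) (S : T -> gset G) :
  (forall t, In t L -> p (S t)) -> p (fun y => forall t, In t L -> S t y).
Proof.
  induction L as [|a L IH]; intro H.
  - apply (uf_upE uf_full); simpl; tauto.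
  - assert (H1 : p (fun y => forall t, In t L -> S t y)) by (apply IH; intros; apply H; simpl; auto).
    assert (H2 := H a (or_introl eq_refl)).
    apply (uf_upE (uf_meet H2 H1)). simpl. intros y [h1 h2] t [e|e]; subst; auto.
Qed.
End UF.
Lemma uf_sub (p q : ufam G) : ultrafilter p -> ultrafilter q -> (forall A, p A -> q A) -> q = p.
Proof.
  intros Hp Hq H. apply ueq_eq. intro A; split; auto.
  intro HA. destruct (uf_em Hp A) as [|HN]; auto. exfalso.
  apply (uf_not Hq HA (H _ HN)).
Qed.

Lemma free_ufree p : free p -> ultrafilter p. Proof. intros [h _]; exact h. Qed.
Lemma free_cofin p x : free p -> p (fun y => ~ y = x).
Proof.
  intros [Hu Hf]. apply uf_notE; auto. intro H. apply (Hf _ H). exists [x].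
  intros y ->; simpl; auto.
Qed.
Lemma free_list p L : free p -> p (fun y => ~ In y L).
Proof. intro H; apply uf_list; [apply H|]; intros; apply free_cofin; auto. Qed.

Lemma prodE p q A : upc p -> upc q ->
  (uprod p q A <-> p (fun x => q (fun y => A (x ** y)))).
Proof.
  intros Hp Hq; split.
  - intros [P [HP [Q [HQ HA]]]]. apply (Hp _ _ HP). intros x Px.
    apply (Hq _ _ (HQ x Px)). intros y Qy; apply HA; auto.
  - intro H. exists (fun x => q (fun y => A (x ** y))). split; auto.
    exists (fun x y => A (x ** y)). split; auto.
Qed.

Lemma transE g p A : upc p -> (utrans g p A <-> p (fun y => A (g ** y))).
Proof.
  intro Hp; split.
  - intros [P [HP E]]. apply (Hp _ _ HP). intros y Py. apply E; eauto.
  - intro H. exists (fun y => A (g ** y)); split; auto. intro x; split.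
    + intro Ax. exists (inv g ** x). rewrite mul_K. auto.
    + intros [y [Ay ->]]; auto.
Qed.

Lemma prod_uf p q : ultrafilter p -> ultrafilter q -> ultrafilter (uprod p q).
Proof.
  intros Hp Hq. pose proof (uf_up Hp) as up. pose proof (uf_up Hq) as uq.
  repeat split.
  - apply prodE; auto. apply (up _ _ (uf_full Hp)). intros; apply uf_full; auto.
  - rewrite prodE; auto. intro H. destruct (uf_nonempty Hp H) as [x Hx].
    destruct (uf_nonempty Hq Hx) as [y []].
  - intros A B HA HB. rewrite prodE in *; auto. apply (up _ _ HA). intros x Hx.
    apply (uq _ _ Hx). auto.
  - intros A B HA HB. rewrite prodE in *; auto. apply (up _ _ (uf_meet Hp HA HB)).
    intros x [h1 h2]. apply (uf_meet Hq h1 h2).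
  - intro A. rewrite !prodE; auto.
    destruct (uf_em Hp (fun x => q (fun y => A (x ** y)))) as [|H]; auto.
    right. apply (up _ _ H). intros x Hx. apply uf_notE; auto.
Qed.

Lemma trans_uf g p : ultrafilter p -> ultrafilter (utrans g p).
Proof.
  intros Hp. pose proof (uf_up Hp) as up.
  repeat split.
  - apply transE; auto. apply uf_full; auto.
  - rewrite transE; auto. intro H. destruct (uf_nonempty Hp H) as [x []].
  - intros A B HA HB. rewrite transE in *; auto. apply (up _ _ HA). auto.
  - intros A B HA HB. rewrite transE in *; auto. apply (uf_meet Hp HA HB).
  - intro A. rewrite !transE; auto. apply (uf_em Hp (fun y => A (g ** y))).
Qed.

Lemma prod_assoc p q r : ultrafilter p -> ultrafilter q -> ultrafilter r ->
  uprod (uprod p q) r = uprod p (uprod q r).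
Proof.
  intros Hp Hq Hr. apply ueq_eq; intro A.
  assert (upq := uf_up (prod_uf Hp Hq)). assert (uqr := uf_up (prod_uf Hq Hr)).
  rewrite !prodE; try apply uf_up; auto.
  split; intro H; (eapply (uf_up Hp); [exact H|]); intros x Hx;
  rewrite prodE in *; try apply uf_up; auto;
  (eapply (uf_up Hq); [exact Hx|]); intros y Hy;
  (eapply (uf_up Hr); [exact Hy|]); intros z Hz; simpl in *;
  rewrite ?gmul_assoc in *; auto.
  all: apply prod_uf; auto.
Qed.

Lemma prod_free p q : ultrafilter p -> free q -> free (uprod p q).
Proof.
  intros Hp [Hq Hf]. split; [apply prod_uf; auto|].
  intros A HA [L HL]. rewrite prodE in HA; try apply uf_up; auto.
  destruct (uf_nonempty Hp HA) as [x Hx].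
  apply (Hf _ Hx). exists (map (fun z => inv x ** z) L).
  intros y Hy. apply HL in Hy. replace y with (inv x ** (x ** y)) by apply mul_VK.
  apply in_map; auto.
Qed.

Lemma trans_trans a b p : ultrafilter p -> utrans a (utrans b p) = utrans (a ** b) p.
Proof.
  intro Hp. apply ueq_eq; intro A. rewrite !transE;
  try (apply uf_up; try apply trans_uf; auto).
  split; intro H; (eapply (uf_up Hp); [exact H|]); intros; simpl in *; rewrite ?gmul_assoc in *; auto.
Qed.

Lemma trans_one p : ultrafilter p -> utrans one p = p.
Proof.
  intro Hp. apply ueq_eq; intro A. rewrite transE; try apply uf_up; auto.
  split; intro H; (eapply (uf_up Hp); [exact H|]); intros; simpl in *; rewrite ?gmul_1l in *; auto.
Qed.

End S.

Section S.
Variable G : Group.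
Local Notation "x ** y" := (gmul G x y) (at level 40, left associativity).
Local Notation one := (gone G).
Local Notation inv := (ginv G).
Implicit Types (p q r e u : ufam G) (A B S : gset G) (a g h x y : G).

Definition filt p := p (fun _ => True) /\ ~ p (fun _ => False) /\ upc p /\
  (forall A B, p A -> p B -> p (fun x => A x /\ B x)).

Lemma ultra_lemma (F : ufam G) :
  (exists S, F S) -> (forall S, F S -> exists x, S x) ->
  (forall S B, F S -> F B -> exists U, F U /\ forall x, U x -> S x /\ B x) ->
  exists u, ultrafilter u /\ forall S, F S -> u S.
Proof.
  intros [S0 HS0] Fne Fmeet.
  set (T := {p : ufam G | filt p /\ forall S, F S -> p S}).
  set (p0 := fun S => exists U, F U /\ forall x, U x -> S x).
  assert (Hp0 : filt p0 /\ forall S, F S -> p0 S).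
  { split; [split; [|split; [|split]]|].
    - exists S0; split; auto.
    - intros [U [FU HU]]. destruct (Fne _ FU) as [x Hx]. exact (HU x Hx).
    - intros A B [U [FU HU]] HAB. exists U; split; auto.
    - intros A B [U [FU HU]] [V [FV HV]]. destruct (Fmeet _ _ FU FV) as [W [FW HW]].
      exists W; split; auto. intros x Wx; destruct (HW x Wx); auto.
    - intros S FS; exists S; split; auto. }
  destruct (@zornP T (exist _ p0 Hp0) (fun c d => forall A, proj1_sig c A -> proj1_sig d A))
    as [[m [Hm HFm]] Hmax]; auto.
  - intros Ch HCh. destruct (classic (exists c, Ch c)) as [[c0 Cc0]|N].
    + set (U := fun S => exists c : T, Ch c /\ proj1_sig c S).
      assert (HU : filt U /\ forall S, F S -> U S).
      { split; [split; [|split; [|split]]|].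
        - exists c0; split; auto. destruct (proj2_sig c0) as [[h _] _]; exact h.
        - intros [c [_ Hc]]. destruct (proj2_sig c) as [[_ [h _]] _]. exact (h Hc).
        - intros S B [c [Cc Hc]] HSB. exists c; split; auto.
          destruct (proj2_sig c) as [[_ [_ [h _]]] _]. exact (h _ _ Hc HSB).
        - intros S B [c1 [C1 H1]] [c2 [C2 H2]].
          destruct (HCh c1 c2 C1 C2) as [E|E].
          + exists c2; split; auto. destruct (proj2_sig c2) as [[_ [_ [_ h]]] _].
            apply h; auto.
          + exists c1; split; auto. destruct (proj2_sig c1) as [[_ [_ [_ h]]] _].
            apply h; auto.
        - intros S FS. exists c0; split; auto. destruct (proj2_sig c0) as [_ h]; auto. }
      exists (exist _ U HU). intros c Cc A HA. simpl. exists c; auto.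
    + exists (exist _ p0 Hp0). intros s As; exfalso; eauto.
  - exists m. split; [|exact HFm].
    destruct Hm as (m1 & m2 & m3 & m4).
    split; [|split; [|split; [|split]]]; auto.
    intro A. apply NNPP; intro N. apply not_or_and in N. destruct N as [NA NnA].
    destruct (classic (exists P, m P /\ forall x, P x -> ~ A x)) as [[P [HP HPA]]|N2].
    + apply NnA. apply (m3 _ _ HP). auto.
    + set (m' := fun S => exists P, m P /\ forall x, P x -> A x -> S x).
      assert (Hm' : filt m' /\ forall S, F S -> m' S).
      { split; [split; [|split; [|split]]|].
        - exists (fun _ => True); split; auto.
        - intros [P [HP HPS]]. apply N2. exists P; split; auto.
        - intros S B [P [HP HPS]] HSB. exists P; split; auto.
        - intros S B [P [HP HPS]] [Q [HQ HQB]]. exists (fun x => P x /\ Q x); split; auto.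
          intros x [] Ax; auto.
        - intros S FS. exists S; split; auto. }
      assert (Hle := Hmax (exist _ m' Hm')). simpl in Hle.
      apply NA. apply Hle.
      + intros S HS. exists S; split; auto.
      + exists (fun _ => True); split; auto.
Qed.

Lemma free_exists X : ~ finite_set X -> exists u, free u /\ u X.
Proof.
  intro HX.
  destruct (@ultra_lemma (fun S => exists L : list G, forall x, S x <-> X x /\ ~ In x L))
    as [u [Hu HF]].
  - exists X, []. intros; simpl; tauto.
  - intros S [L HL]. apply NNPP; intro N. apply HX. exists L.
    intros x Xx. apply NNPP; intro N2. apply N. exists x. apply HL; auto.
  - intros S B [L1 H1] [L2 H2]. exists (fun x => X x /\ ~ In x (L1 ++ L2)). split.
    + exists (L1 ++ L2); tauto.
    + intros x [Xx Nx]. rewrite H1, H2. rewrite in_app_iff in Nx. tauto.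
  - exists u. split; [split; auto|].
    + intros A HA [L HL].
      assert (H := HF (fun x => X x /\ ~ In x L) (ex_intro _ L (fun x => iff_refl _))).
      destruct (uf_nonempty Hu (uf_meet Hu HA H)) as [x [Ax [_ N]]]. auto.
    + apply HF. exists []. intros; simpl; tauto.
Qed.

End S.

Section S.
Variable G : Group.
Local Notation "x ** y" := (gmul G x y) (at level 40, left associativity).
Local Notation one := (gone G).
Local Notation inv := (ginv G).
Implicit Types (p q r e u : ufam G) (A B S : gset G) (a g h x y : G).
Implicit Types (C D E M : ufam G -> Prop).

Lemma compact (K : (ufam G -> Prop) -> Prop) :
  (exists C, K C) -> (forall C, K C -> uclosed C /\ exists p, C p) ->
  (forall C D, K C -> K D -> exists E, K E /\ forall p, E p -> C p /\ D p) ->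
  exists u, forall C, K C -> C u.
Proof.
  intros [C0 KC0] HK Hdir.
  destruct (@ultra_lemma G (fun S => exists C, K C /\ forall p, C p -> p S))
    as [u [Hu HF]].
  - exists (fun _ => True), C0. split; auto. intros p Cp.
    destruct (HK _ KC0) as [[h _] _]. apply uf_full; auto.
  - intros S [C [KC HC]]. destruct (HK _ KC) as [[h _] [p Cp]].
    apply (uf_nonempty (h _ Cp) (HC _ Cp)).
  - intros S B [C [KC HC]] [D [KD HD]]. destruct (Hdir _ _ KC KD) as [E [KE HE]].
    exists (fun x => S x /\ B x). split; auto.
    exists E; split; auto. intros p Ep. destruct (HE _ Ep).
    destruct (HK _ KE) as [[h _] _]. apply (uf_meet (h _ Ep) (HC _ H) (HD _ H0)).
  - exists u. intros C KC. destruct (HK _ KC) as [[h1 h2] _]. apply h2.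
    split; auto. intros A HA. apply NNPP; intro N.
    assert (HF' : u (fun x => ~ A x)).
    { apply HF. exists C; split; auto. intros p Cp. apply uf_notE; auto.
      intro pA; apply N; eauto. }
    apply (uf_not Hu HA HF').
Qed.

Lemma ucl_mono C D p : (forall q, C q -> D q) -> ucl C p -> ucl D p.
Proof. intros H [h1 h2]; split; auto. intros A HA; destruct (h2 A HA) as [q []]; eauto. Qed.

Lemma uclosed_ext C D : (forall p, C p <-> D p) -> uclosed C -> uclosed D.
Proof.
  intros E [h1 h2]. split; [firstorder|]. intros p Hp. apply E, h2.
  eapply ucl_mono; [|exact Hp]. firstorder.
Qed.

Lemma closed_clopen B : uclosed (fun p => ultrafilter p /\ p B).
Proof.
  split; [tauto|]. intros p [Hp Hcl]. split; auto.
  destruct (uf_em Hp B) as [|HN]; auto. destruct (Hcl _ HN) as [q [[Hq qB] qN]].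
  exfalso; apply (uf_not Hq qB qN).
Qed.

Lemma closed_free : uclosed (@free G).
Proof.
  split; [intros; apply free_ufree; auto|]. intros p [Hp Hcl]. split; auto.
  intros A HA Hfin. destruct (Hcl _ HA) as [q [[_ Hq] qA]]. exact (Hq _ qA Hfin).
Qed.

Lemma closed_inter C D : uclosed C -> uclosed D -> uclosed (fun p => C p /\ D p).
Proof.
  intros [c1 c2] [d1 d2]. split; [firstorder|]. intros p Hp. split.
  - apply c2. eapply ucl_mono; [|exact Hp]. intros ? []; auto.
  - apply d2. eapply ucl_mono; [|exact Hp]. intros ? []; auto.
Qed.

Lemma closed_biginter (K : (ufam G -> Prop) -> Prop) :
  (exists C, K C) -> (forall C, K C -> uclosed C) -> uclosed (fun p => forall C, K C -> C p).
Proof.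
  intros [C0 KC0] HK. split.
  - intros p Hp. apply (proj1 (HK _ KC0)). apply Hp. exact KC0.
  - intros p0 Hp0 C KC. apply (proj2 (HK _ KC)). eapply ucl_mono; [|exact Hp0].
    intros q Hq. apply Hq. exact KC.
Qed.

Lemma closed_single e : ultrafilter e -> uclosed (fun p => p = e).
Proof.
  intro He. split; [intros; subst; auto|]. intros p [Hp Hcl].
  symmetry. apply uf_sub; auto. intros A HA. destruct (Hcl A HA) as [q [-> h]]; auto.
Qed.

Lemma closed_pre C q : uclosed C -> ultrafilter q ->
  uclosed (fun r => ultrafilter r /\ C (uprod r q)).
Proof.
  intros [c1 c2] Hq. split; [tauto|]. intros r [Hr Hcl]. split; auto.
  apply c2. split; [apply prod_uf; auto|]. intros A HA.
  rewrite prodE in HA; try apply uf_up; auto.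
  destruct (Hcl _ HA) as [r' [[Hr' Cr'] h]]. exists (uprod r' q); split; auto.
  rewrite prodE; try apply uf_up; auto.
Qed.

Lemma closed_image C q : uclosed C -> ultrafilter q ->
  uclosed (fun p => exists r, C r /\ p = uprod r q).
Proof.
  intros HC Hq. split.
  - intros p [r [Cr ->]]. apply prod_uf; auto. apply (proj1 HC); auto.
  - intros u Hcl. destruct Hcl as [Hu Hcl].
    destruct (@compact (fun D => exists A, u A /\ D = fun r => C r /\ uprod r q A))
      as [r Hr].
    + exists (fun r => C r /\ uprod r q (fun _ => True)). exists (fun _ => True).
      split; auto. apply uf_full; auto.
    + intros D [A [uA ->]]. split.
      * assert (H := closed_inter HC (closed_pre (closed_clopen A) Hq)).
        split.
        -- intros r [Cr _]. apply (proj1 HC); auto.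
        -- intros r Hr. destruct (proj2 H r) as [Cr [_ [_ h]]].
           ++ eapply ucl_mono; [|exact Hr]. intros t [Ct h']. split; auto.
              split; [apply (proj1 HC); auto|]. split; auto.
              apply prod_uf; auto; apply (proj1 HC); auto.
           ++ split; auto.
      * destruct (Hcl A uA) as [p [[r [Cr ->]] h]]. exists r; split; auto.
    + intros D E [A [uA ->]] [B [uB ->]]. exists (fun r => C r /\ uprod r q (fun x => A x /\ B x)).
      split.
      * exists (fun x => A x /\ B x). split; auto. apply uf_meet; auto.
      * intros p [Cp h]. assert (Hp : ultrafilter (uprod p q)) by (apply prod_uf; auto; apply (proj1 HC); auto).
        split; split; auto; (eapply uf_upE; [exact Hp|exact h|]); intros ? []; auto.
    + exists r. assert (Cr : C r).
      { destruct (Hr (fun r => C r /\ uprod r q (fun _ => True))) as [h _]; auto.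
        exists (fun _ => True); split; auto. apply uf_full; auto. }
      split; auto. symmetry. apply uf_sub; auto.
      * apply prod_uf; auto. apply (proj1 HC); auto.
      * intros A HA. destruct (Hr (fun r => C r /\ uprod r q A)) as [_ h]; eauto.
Qed.

Lemma minimal_exists (Fam : (ufam G -> Prop) -> Prop) C0 : Fam C0 ->
  (forall K : (ufam G -> Prop) -> Prop, (exists C, K C) -> (forall C, K C -> Fam C) ->
     (forall C D, K C -> K D -> (forall p, C p -> D p) \/ (forall p, D p -> C p)) ->
     Fam (fun p => forall C, K C -> C p)) ->
  exists M, Fam M /\ (forall p, M p -> C0 p) /\
    forall D, Fam D -> (forall p, D p -> M p) -> forall p, M p -> D p.
Proof.
  intros F0 Hch.
  set (T := {C | Fam C /\ forall p, C p -> C0 p}).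
  destruct (@zornP T (exist _ C0 (conj F0 (fun p (hh : C0 p) => hh))) (fun c d => forall p, proj1_sig d p -> proj1_sig c p))
    as [[M [FM HM]] Hmax]; auto.
  - intros Ch HCh. destruct (classic (exists c, Ch c)) as [[c0 Cc0]|N].
    + set (K := fun C => exists c : T, Ch c /\ proj1_sig c = C).
      assert (HI : Fam (fun p => forall C, K C -> C p) /\
                   forall p, (forall C, K C -> C p) -> C0 p).
      { split.
        - apply Hch.
          + exists (proj1_sig c0); exists c0; auto.
          + intros C [c [_ <-]]. exact (proj1 (proj2_sig c)).
          + intros C D [c [Cc <-]] [d [Cd <-]]. destruct (HCh _ _ Cc Cd); auto.
        - intros p H. apply (proj2 (proj2_sig c0)). apply H. exists c0; auto. }
      exists (exist (fun C => Fam C /\ forall p, C p -> C0 p) (fun p => forall C, K C -> C p) HI). intros c Cc p Hp. simpl in Hp. apply Hp. exists c; auto.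
    + exists (exist _ C0 (conj F0 (fun p (hh : C0 p) => hh))). intros s Cs; exfalso; eauto.
  - exists M. split; auto. split; auto. intros D FD HD.
    assert (HDT : Fam D /\ forall p, D p -> C0 p) by (split; auto).
    apply (Hmax (exist _ D HDT)). simpl. auto.
Qed.

Definition subsemi C := forall p q, C p -> C q -> C (uprod p q).

Lemma ellis (SS : ufam G -> Prop) : (exists p, SS p) -> uclosed SS -> subsemi SS ->
  exists e, SS e /\ uprod e e = e.
Proof.
  intros HS HcS HsS.
  destruct (@minimal_exists (fun C => (exists p, C p) /\ uclosed C /\ subsemi C) SS)
    as [M [[[e Me] [HcM HsM]] [MS Hmin]]]; [split; [exact HS|split; [exact HcS|exact HsS]]|..].
  - intros K [C0 KC0] HK Hch. split; [|split].
    + destruct (@compact K) as [u Hu].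
      * eauto.
      * intros C KC; destruct (HK C KC) as [h1 [h2 _]]; auto.
      * intros C D KC KD. destruct (Hch C D KC KD); [exists C|exists D]; split; auto.
      * exists u. exact Hu.
    + apply closed_biginter; eauto. intros C KC; apply (HK C KC).
    + intros p q Hp Hq C KC. apply (HK C KC); [apply Hp|apply Hq]; exact KC.
  - assert (Hu : forall p, M p -> ultrafilter p) by (apply HcM).
    exists e. split; auto.
    (* M e = M *)
    assert (H1 : forall p, M p -> exists r, M r /\ p = uprod r e).
    { apply (Hmin (fun p => exists r, M r /\ p = uprod r e)).
      - split; [exists (uprod e e); exists e; auto|split].
        + apply closed_image; auto.
        + intros p q [r [Mr ->]] [r' [Mr' ->]]. exists (uprod (uprod r e) r'). split.
          * apply HsM; auto.
          * symmetry; apply prod_assoc; [apply prod_uf|..]; auto.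
      - intros p [r [Mr ->]]. apply HsM; auto. }
    destruct (H1 e Me) as [r0 [Mr0 Er0]].
    assert (H2 : forall p, M p -> M p /\ uprod p e = e).
    { apply (Hmin (fun p => M p /\ uprod p e = e)).
      - split; [exists r0; auto|split].
        + apply (@uclosed_ext (fun p => M p /\ (ultrafilter p /\ uprod p e = e))).
          * intro p; split; [intros [h1 [_ h2]]; auto|intros [h1 h2]; auto].
          * apply closed_inter; auto. apply (closed_pre (closed_single (Hu _ Me)) (Hu _ Me)).
        + intros p q [Mp Ep] [Mq Eq]. split; [apply HsM; auto|].
          rewrite prod_assoc, Eq, Ep; auto.
      - tauto. }
    apply (H2 e Me).
Qed.

End S.

Section S.
Variable G : Group.
Local Notation "x ** y" := (gmul G x y) (at level 40, left associativity).
Local Notation one := (gone G).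
Local Notation inv := (ginv G).
Implicit Types (p q r e u : ufam G) (A B S X : gset G) (a g h x : G).
Implicit Types (C D E M : ufam G -> Prop).

Lemma closed_star X : uclosed (star X).
Proof.
  apply (uclosed_ext (C:=fun p => free p /\ (ultrafilter p /\ p X))).
  - intro p; unfold star; split; [tauto|intros [h1 h2]; split; auto; split; auto; apply h1].
  - apply closed_inter; [apply closed_free|apply closed_clopen].
Qed.

Lemma nonsc_step X q : star X q -> ~ Delta_finite q X -> exists r, free r /\ uprod r q X.
Proof.
  intros [Hq qX] ND.
  assert (Hq' : ultrafilter q) by apply Hq.
  destruct (@free_exists G (fun g => utrans g q X)) as [r [Hr rD]].
  - intros [L HL]. apply ND. exists L. intros g Hg. exists g; split; auto.
    intro; tauto.
  - exists r; split; auto. rewrite prodE; try apply uf_up; auto; try apply Hr.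
    apply (uf_upE (free_ufree Hr) rD). intros g Hg. rewrite transE in Hg; auto.
    apply uf_up; auto.
Qed.

Lemma nonsc_idem A : ~ scattered A ->
  exists e y, free e /\ uprod e e = e /\ ultrafilter y /\ uprod e y A.
Proof.
  intro NS. unfold scattered in NS.
  apply not_all_ex_not in NS. destruct NS as [X NS].
  apply imply_to_and in NS. destruct NS as [XA NS].
  apply imply_to_and in NS. destruct NS as [Xinf NS].
  assert (ND : forall p, star X p -> ~ Delta_finite p X).
  { intros p Hp HD. apply NS. exists p; auto. }
  clear NS.
  set (Fam := fun C => (exists p, C p) /\ uclosed C /\ (forall p, C p -> star X p) /\
                       (forall y, C y -> exists r, free r /\ C (uprod r y))).
  destruct (@minimal_exists G Fam (star X)) as [M [[[y My] [HcM [MX Mprop]]] [_ Hmin]]].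
  - split; [|split; [apply closed_star|split; auto]].
    + destruct (free_exists Xinf) as [u [Hu uX]]. exists u; split; auto.
    + intros y Hy. destruct (nonsc_step Hy (ND _ Hy)) as [r [Hr rX]].
      exists r; split; auto. split; auto. apply prod_free; [apply Hr|apply Hy].
  - intros K [C0 KC0] HK Hch.
    split; [|split; [|split]].
    + destruct (@compact G K) as [u Hu]; [eauto| |..].
      * intros C KC; destruct (HK C KC) as [h1 [h2 _]]; auto.
      * intros C D KC KD. destruct (Hch C D KC KD); [exists C|exists D]; split; auto.
      * exists u; exact Hu.
    + apply closed_biginter; eauto. intros C KC; apply (HK C KC).
    + intros p Hp. apply (HK C0 KC0). apply Hp; exact KC0.
    + intros y Hy.
      assert (Hyu : ultrafilter y) by (apply (HK C0 KC0), Hy; exact KC0).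
      destruct (@compact G (fun D => exists C, K C /\ D = fun r => free r /\ C (uprod r y)))
        as [r Hr].
      * exists (fun r => free r /\ C0 (uprod r y)); eauto.
      * intros D [C [KC ->]]. destruct (HK C KC) as [_ [HcC [_ Cp]]]. split.
        -- apply (uclosed_ext (C:=fun r => free r /\ (ultrafilter r /\ C (uprod r y)))).
           ++ intro r; split; [tauto|intros [h1 h2]; split; auto; split; auto; apply h1].
           ++ apply closed_inter; [apply closed_free|apply closed_pre; auto].
        -- apply Cp. apply Hy; exact KC.
      * intros D E [C [KC ->]] [C' [KC' ->]]. destruct (Hch C C' KC KC') as [h|h].
        -- exists (fun r => free r /\ C (uprod r y)). split; eauto. intros p [];
           split; split; auto.
        -- exists (fun r => free r /\ C' (uprod r y)). split; eauto. intros p [];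
           split; split; auto.
      * exists r. destruct (Hr (fun r => free r /\ C0 (uprod r y))) as [Hfr _]; eauto.
        split; auto. intros C KC. destruct (Hr (fun r => free r /\ C (uprod r y))); eauto.
  - assert (Hyu : ultrafilter y) by (apply MX; auto).
    assert (H1 : forall p, M p -> M p /\ exists r, free r /\ p = uprod r y).
    { apply (Hmin (fun p => M p /\ exists r, free r /\ p = uprod r y)).
      - split; [|split; [|split]].
        + destruct (Mprop y My) as [r [Hr Mr]]. exists (uprod r y); eauto.
        + apply closed_inter; auto. apply closed_image; auto. apply closed_free.
        + intros p [Mp _]; auto.
        + intros p [Mp [r [Hr ->]]]. destruct (Mprop _ Mp) as [s [Hs Ms]].
          exists s; split; auto. split; auto. exists (uprod s r). split.
          * apply prod_free; auto. apply Hs.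
          * symmetry; apply prod_assoc; auto; [apply Hs|apply Hr].
      - tauto. }
    destruct (H1 y My) as [_ [r0 [Hr0 Ey]]].
    destruct (@ellis G (fun r => free r /\ uprod r y = y)) as [e [[He Eey] Eee]].
    + exists r0; auto.
    + apply (uclosed_ext (C:=fun r => free r /\ (ultrafilter r /\ uprod r y = y))).
      * intro r; split; [tauto|intros [h1 h2]; split; auto; split; auto; apply h1].
      * apply closed_inter; [apply closed_free|apply (closed_pre (C := fun p => p = y)); auto].
        apply closed_single; auto.
    + intros p q [Hp Ep] [Hq Eq]. split.
      * apply prod_free; auto. apply Hp.
      * rewrite prod_assoc, Eq, Ep; auto; [apply Hp|apply Hq].
    + exists e, y. split; auto. split; auto. split; auto.
      rewrite Eey. apply (uf_upE Hyu (proj2 (MX _ My))). auto.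
Qed.

End S.

Lemma lt_trans' : Relations_1.Transitive lt.
Proof. intros x y z; lia. Qed.

Lemma ss_app_inv (l1 l2 : list nat) : StronglySorted lt (l1 ++ l2) ->
  StronglySorted lt l1 /\ forall x y, In x l1 -> In y l2 -> x < y.
Proof.
  induction l1 as [|a l1 IH]; simpl; intro H.
  - split; [constructor|tauto].
  - apply StronglySorted_inv in H. destruct H as [H1 H2].
    destruct (IH H1) as [h1 h2]. split.
    + constructor; auto. rewrite Forall_forall in *. intros; apply H2, in_app_iff; auto.
    + intros x y [<-|hx] hy; auto. rewrite Forall_forall in H2. apply H2, in_app_iff; auto.
Qed.

Lemma sorted_ss (l : list nat) : Sorted lt l -> StronglySorted lt l.
Proof. apply Sorted_StronglySorted, lt_trans'. Qed.

Section S.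
Variable G : Group.
Local Notation "x ** y" := (gmul G x y) (at level 40, left associativity).
Local Notation one := (gone G).
Local Notation inv := (ginv G).
Implicit Types (p q r e u : ufam G) (A B S X : gset G) (a g h x : G).

Lemma gprodl_app (f : nat -> G) l1 l2 : gprodl G f (l1 ++ l2) = gprodl G f l1 ** gprodl G f l2.
Proof.
  induction l1 as [|i l1 IH]; simpl.
  - rewrite gmul_1l; auto.
  - rewrite IH, gmul_assoc; auto.
Qed.

Definition fpl_step (acc : list G) a := acc ++ a :: map (fun x => x ** a) acc.
Definition FPL (L : list G) := fold_left fpl_step L [].

Lemma FPL_snoc L a : FPL (L ++ [a]) = fpl_step (FPL L) a.
Proof. unfold FPL; rewrite fold_left_app; reflexivity. Qed.

Section GG.
Variables (e r : ufam G) (A : gset G).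
Hypotheses (He : free e) (Hee : uprod e e = e) (Hr : ultrafilter r) (HA : uprod e r A).

Let Heu : ultrafilter e := free_ufree He.

Definition st (C : gset G) : gset G := fun x => C x /\ e (fun z => C (x ** z)).

Lemma st_in C : e C -> e (st C).
Proof.
  intro HC. assert (H2 : e (fun x => e (fun z => C (x ** z)))).
  { rewrite <- Hee in HC. rewrite prodE in HC; try apply uf_up; auto. }
  exact (uf_meet Heu HC H2).
Qed.


Lemma st_trans C x : st C x -> e (fun z => st C (x ** z)).
Proof.
  intros [Cx HCx]. apply (uf_upE Heu (st_in HCx)).
  intros z [h1 h2]. split; auto.
  apply (uf_upE Heu h2). intros w; rewrite gmul_assoc; auto.
Qed.

Let B0 := fun x => r (fun z => A (x ** z)).
Let B := st B0.

Lemma eB : e B.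
Proof. apply st_in. unfold B0. rewrite prodE in HA; try apply uf_up; auto. Qed.

Definition nextS (L : list G) := fun z => B z /\ (forall x, In x (FPL L) -> B (x ** z)) /\ ~ In z L.
Definition next (L : list G) := epsilon (inhabits one) (nextS L).

Fixpoint gl (n : nat) : list G :=
  match n with 0 => [] | S n => gl n ++ [next (gl n)] end.

Definition gg n := next (gl n).

Lemma FPL_B n : forall x, In x (FPL (gl n)) -> B x.
Proof.
  induction n as [|n IH]; simpl.
  - unfold FPL; simpl; tauto.
  - assert (Hs : nextS (gl n) (next (gl n))).
    { unfold next; apply epsilon_spec. apply (uf_nonempty Heu).
      unfold nextS. apply uf_meet; auto; [apply eB|]. apply uf_meet; auto.
      - apply (uf_biglist Heu (S := fun x z => B (x ** z))). intros x Hx.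
        apply st_trans. apply IH; auto.
      - apply free_list; auto. }
    destruct Hs as [h1 [h2 h3]].
    rewrite FPL_snoc. unfold fpl_step. intros x Hx. apply in_app_iff in Hx.
    destruct Hx as [Hx|[<-|Hx]]; auto.
    apply in_map_iff in Hx. destruct Hx as [y [<- Hy]]. auto.
Qed.

Lemma gg_spec n : nextS (gl n) (gg n).
Proof.
  unfold gg, next; apply epsilon_spec. apply (uf_nonempty Heu).
  unfold nextS. apply uf_meet; auto; [apply eB|]. apply uf_meet; auto.
  - apply (uf_biglist Heu (S := fun x z => B (x ** z))). intros x Hx.
    apply st_trans. apply (FPL_B Hx).
  - apply free_list; auto.
Qed.

Lemma gl_in m n : m < n -> In (gg m) (gl n).
Proof.
  induction n as [|n IH]; intro H; [lia|]. simpl. apply in_app_iff.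
  destruct (Nat.eq_dec m n) as [->|N]; [right; left; reflexivity|left; apply IH; lia].
Qed.

Lemma gg_inj m n : gg m = gg n -> m = n.
Proof.
  intro E. destruct (Nat.lt_trichotomy m n) as [h|[h|h]]; auto; exfalso.
  - destruct (gg_spec n) as [_ [_ N]]. apply N. rewrite <- E. apply gl_in; auto.
  - destruct (gg_spec m) as [_ [_ N]]. apply N. rewrite E. apply gl_in; auto.
Qed.

Lemma fp_in n : forall l, l <> [] -> StronglySorted lt l -> (forall i, In i l -> i < n) ->
  In (gprodl G gg l) (FPL (gl n)).
Proof.
  induction n as [|n IH]; intros l Hne Hs Hlt.
  - destruct l as [|i l]; [congruence|]. specialize (Hlt i (or_introl eq_refl)); lia.
  - destruct (exists_last Hne) as [l' [a ->]].
    destruct (ss_app_inv Hs) as [Hs' Hlt'].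
    simpl. rewrite FPL_snoc. unfold fpl_step. apply in_app_iff.
    assert (Ha : a < S n) by (apply Hlt, in_app_iff; simpl; auto).
    destruct (Nat.eq_dec a n) as [->|N].
    + right. rewrite gprodl_app. simpl. rewrite mul_1r.
      destruct l' as [|i l'].
      * left. simpl. rewrite gmul_1l. reflexivity.
      * right. apply in_map with (f := fun x => x ** gg n). apply IH; auto; [congruence|].
        intros j Hj. apply Hlt'; simpl; auto.
    + left. apply IH; auto. intros j Hj. apply in_app_iff in Hj. destruct Hj as [Hj|[<-|[]]].
      * specialize (Hlt' j a Hj (or_introl eq_refl)). lia.
      * lia.
Qed.

Definition bb n := epsilon (inhabits one) (fun z => forall x, In x (FPL (gl (S n))) -> A (x ** z)).

Lemma bb_spec n : forall x, In x (FPL (gl (S n))) -> A (x ** bb n).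
Proof.
  apply (epsilon_spec (inhabits one) (fun z => forall x, In x (FPL (gl (S n))) -> A (x ** z))).
  apply (uf_nonempty Hr). apply (uf_biglist Hr (S := fun x z => A (x ** z))).
  intros x Hx. destruct (FPL_B Hx) as [h _]. exact h.
Qed.

Lemma GG_psFP : contains_psFP A.
Proof.
  exists gg, bb. split; [apply gg_inj|].
  intros x [l [Hne [Hs ->]]]. apply sorted_ss in Hs.
  destruct (exists_last Hne) as [l' [a El]].
  assert (La : last l 0 = a) by (rewrite El; apply last_last).
  rewrite La. apply bb_spec. apply fp_in; auto.
  intros i Hi. rewrite El in Hi, Hs. destruct (ss_app_inv Hs) as [_ H].
  apply in_app_iff in Hi. destruct Hi as [Hi|[<-|[]]].
  - specialize (H i a Hi (or_introl eq_refl)); lia.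
  - lia.
Qed.

End GG.
End S.

Section Pig.
Variable T : Type.
Fixpoint fl (F : nat -> T) n := match n with 0 => [] | S n => F n :: fl F n end.
Lemma fl_in F n y : In y (fl F n) -> exists i, i < n /\ y = F i.
Proof.
  induction n as [|n IH]; simpl; [tauto|]. intros [<-|H]; [exists n; split; [lia|reflexivity]|].
  destruct (IH H) as [i [h1 h2]]; exists i; split; [lia|auto].
Qed.
Lemma pigeon (F : nat -> T) (L : list T) n :
  (forall i j, i < n -> j < n -> F i = F j -> i = j) ->
  (forall i, i < n -> In (F i) L) -> n <= length L.
Proof.
  intros Hinj HL.
  assert (Hl : length (fl F n) = n) by (clear Hinj HL; induction n; simpl; auto).
  rewrite <- Hl. apply NoDup_incl_length.
  - clear Hl HL. induction n as [|n IH]; simpl; constructor.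
    + intro H. destruct (fl_in H) as [i [h1 h2]]. assert (i = n) by (apply Hinj; auto). lia.
    + apply IH. intros; apply Hinj; auto.
  - intros y Hy. destruct (fl_in Hy) as [i [h1 ->]]. auto.
Qed.
End Pig.

Section S.
Variable G : Group.
Local Notation "x ** y" := (gmul G x y) (at level 40, left associativity).
Local Notation one := (gone G).
Local Notation inv := (ginv G).
Implicit Types (p q r e : ufam G) (A B S X : gset G) (a h x : G).

Lemma katetov h q : h <> one -> ultrafilter q -> utrans h q <> q.
Proof.
  intros Hh Hq Eq.
  set (T := {A : gset G | forall x, A x -> ~ A (h ** x)}).
  destruct (@zornP T (exist (fun A : gset G => forall x, A x -> ~ A (h ** x)) (fun _ => False) (fun x (hx : False) => False_ind _ hx))
    (fun c d => forall x, proj1_sig c x -> proj1_sig d x)) as [[A HA] Hmax]; auto.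
  - intros Ch HCh.
    set (U := fun x => exists c : T, Ch c /\ proj1_sig c x).
    assert (HU : forall x, U x -> ~ U (h ** x)).
    { intros x [c [Cc Hc]] [d [Cd Hd]]. destruct (HCh c d Cc Cd) as [E|E].
      - apply (proj2_sig d x); auto.
      - apply (proj2_sig c x); auto. }
    exists (exist _ U HU). intros c Cc x Hx. exists c; auto.
  - simpl in Hmax.
    assert (Cov : forall x, A x \/ A (h ** x) \/ exists y, A y /\ h ** y = x).
    { intro x. apply NNPP; intro N.
      assert (N1 : ~ A x) by tauto. assert (N2 : ~ A (h ** x)) by tauto.
      assert (N3 : ~ exists y, A y /\ h ** y = x) by tauto.
      set (A' := fun z => A z \/ z = x).
      assert (HA' : forall z, A' z -> ~ A' (h ** z)).
      { intros z [Az| ->] [Ahz|Ehz].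
        - apply (HA z); auto.
        - apply N3; eauto.
        - auto.
        - apply Hh. apply (mul_cancel_r (a := x)). rewrite gmul_1l; auto. }
      apply N1. apply (Hmax (exist _ A' HA')); simpl.
      - intros; left; auto.
      - right; reflexivity. }
    assert (KA : ~ q A).
    { intro qA. assert (H1 : utrans h q A) by (rewrite Eq; auto).
      rewrite transE in H1; [|apply uf_up; auto].
      destruct (uf_nonempty Hq (uf_meet Hq qA H1)) as [x [h1 h2]]. exact (HA x h1 h2). }
    assert (qAll := uf_full Hq).
    assert (qCov : q (fun x => A x \/ (A (h ** x) \/ exists y, A y /\ h ** y = x)))
      by (apply (uf_upE Hq qAll); intros x _; apply Cov).
    destruct (uf_or Hq qCov) as [qA|qC]; [tauto|].
    destruct (uf_or Hq qC) as [q1|q2].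
    + apply KA. rewrite <- Eq. rewrite transE; [|apply uf_up; auto]. exact q1.
    + apply KA. rewrite <- Eq in q2. rewrite transE in q2; [|apply uf_up; auto].
      apply (uf_upE Hq q2). intros x [y [Ay E]]. apply mul_cancel_l in E. subst; auto.
Qed.


Lemma last_cons_ne (i : nat) l d : l <> [] -> last (i :: l) d = last l d.
Proof. destruct l; [congruence|reflexivity]. Qed.

Section L3.
Variables (g b : nat -> G).
Hypothesis Hg : forall m n, g m = g n -> m = n.

Definition XG n : gset G := fun x => exists l, l <> [] /\ StronglySorted lt l /\ (forall i, In i l -> n <= i) /\ x = gprodl G g l ** b (last l 0).

Lemma XG_cons i n u : i < n -> XG n u -> psFP G g b (g i ** u).
Proof.
  intros Hi [l [Hne [Hs [Hn ->]]]]. exists (i :: l). split; [congruence|]. split.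
  - apply StronglySorted_Sorted. constructor; auto. apply Forall_forall.
    intros j Hj. specialize (Hn j Hj). lia.
  - rewrite last_cons_ne; auto. simpl. rewrite gmul_assoc. reflexivity.
Qed.

Lemma X_XG0 x : psFP G g b x -> XG 0 x.
Proof.
  intros [l [Hne [Hs ->]]]. exists l; split; auto. split; [apply sorted_ss; auto|].
  split; auto. intros; lia.
Qed.

Lemma XG_split n u : XG n u ->
  XG (S n) u \/ u = g n ** b n \/ exists w, XG (S n) w /\ u = g n ** w.
Proof.
  intros [l [Hne [Hs [Hn ->]]]]. destruct l as [|i l']; [congruence|].
  apply StronglySorted_inv in Hs. destruct Hs as [Hs Hf]. rewrite Forall_forall in Hf.
  assert (Hi : n <= i) by (apply Hn; simpl; auto).
  destruct (Nat.eq_dec i n) as [->|N].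
  - right. destruct l' as [|j l''].
    + left. simpl. rewrite mul_1r. reflexivity.
    + right. exists (gprodl G g (j :: l'') ** b (last (j :: l'') 0)). split.
      * exists (j :: l''). split; [congruence|split; [exact Hs|split; [|reflexivity]]].
        intros k Hk. specialize (Hf k Hk). lia.
      * change (gprodl G g (n :: j :: l'')) with (g n ** gprodl G g (j :: l'')).
        rewrite (@last_cons_ne n (j :: l'')) by congruence. rewrite gmul_assoc. reflexivity.
  - left. exists (i :: l'). split; [congruence|]. split; [constructor; auto; apply Forall_forall; auto|].
    split; auto. intros k [<-|Hk]; [lia|]. specialize (Hf k Hk). lia.
Qed.

Lemma chain q : free q -> q (psFP G g b) -> forall N, exists y n, N <= n /\ q (fun x => exists u, XG n u /\ x = y ** u).
Proof.
  intros Hq qX. assert (Hqu : ultrafilter q) by apply Hq.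
  induction N as [|N IH].
  - exists one, 0. split; auto. apply (uf_upE Hqu qX). intros x Hx.
    exists x; split; [apply X_XG0; auto|rewrite gmul_1l; auto].
  - destruct IH as [y [n [Hn Hy]]].
    assert (H3 : q (fun x => (exists u, XG (S n) u /\ x = y ** u) \/
        (x = y ** (g n ** b n) \/ exists u, XG (S n) u /\ x = (y ** g n) ** u))).
    { apply (uf_upE Hqu Hy). intros x [u [Hu ->]].
      destruct (XG_split Hu) as [h|[h|[w [Hw ->]]]].
      - left; eauto.
      - right; left; subst; auto.
      - right; right. exists w; split; auto. rewrite gmul_assoc; auto. }
    destruct (uf_or Hqu H3) as [h|h].
    + exists y, (S n). split; [lia|auto].
    + destruct (uf_or Hqu h) as [h'|h'].
      * exfalso. apply (uf_not Hqu h' (free_cofin _ Hq)).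
      * exists (y ** g n), (S n). split; [lia|auto].
Qed.

Lemma X_infinite : ~ finite_set (psFP G g b).
Proof.
  intros [L HL].
  set (N := S (length L)).
  assert (H := @pigeon G (fun i => g i ** (g N ** b N)) L N).
  assert (HN : N <= length L); [|unfold N in HN; lia].
  apply H.
  - intros i j _ _ E. apply mul_cancel_r in E. auto.
  - intros i Hi. apply HL. exists [i; N]. split; [congruence|]. split.
    + apply Sorted_cons; [apply Sorted_cons; constructor|constructor; exact Hi].
    + simpl. rewrite mul_1r, gmul_assoc. reflexivity.
Qed.

Lemma psFP_not_scattered A : (forall x, psFP G g b x -> A x) -> ~ scattered A.
Proof.
  intros HXA Hsc. destruct (Hsc _ HXA X_infinite) as [q [[Hq qX] [L HL]]].
  assert (Hqu : ultrafilter q) by apply Hq.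
  destruct (chain Hq qX (S (length L))) as [y [n [Hn Hy]]].
  set (d := fun i => g i ** inv y).
  assert (Hd : forall i, i < n -> utrans (d i) q (psFP G g b)).
  { intros i Hi. rewrite transE; [|apply uf_up; auto].
    apply (uf_upE Hqu Hy). intros x [u [Hu ->]]. unfold d.
    rewrite <- gmul_assoc, mul_VK. apply XG_cons with (n := n); auto. }
  assert (HF : forall i, i < n -> In (utrans (d i) q) (map (fun h => utrans h q) L)).
  { intros i Hi. destruct (HL _ (Hd i Hi)) as [h [Lh E]]. apply ueq_eq in E. rewrite E.
    exact (in_map (fun h0 => utrans h0 q) L h Lh). }
  destruct (classic (forall i j, i < n -> j < n -> utrans (d i) q = utrans (d j) q -> i = j))
    as [Hinj|Hn'].
  - assert (H := pigeon Hinj HF). rewrite length_map in H. lia.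
  - apply Hn'. intros i j Hi Hj E. apply NNPP; intro Nij.
    apply (@katetov (inv (d j) ** d i) q); auto.
    + intro E1. apply Nij.
      assert (d i = d j).
      { rewrite <- (mul_K (d j) (d i)), E1, mul_1r. reflexivity. }
      unfold d in H. apply mul_cancel_r in H. auto.
    + rewrite <- trans_trans, E, trans_trans, gmul_Vl, trans_one; auto.
Qed.

End L3.
End S.

Section S.
Variable G : Group.
Local Notation "x ** y" := (gmul G x y) (at level 40, left associativity).
Local Notation one := (gone G).
Local Notation inv := (ginv G).
Implicit Types (p q r e : ufam G) (A B S X : gset G) (a h x : G).

Lemma idem_nonsc e y A : free e -> uprod e e = e -> ultrafilter y -> uprod e y A -> ~ scattered A.
Proof.
  intros He Hee Hy HA. destruct (GG_psFP He Hee Hy HA) as [g [b [Hg Hsub]]].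
  exact (psFP_not_scattered Hg Hsub).
Qed.

Lemma Sc_of_idem e : free e -> uprod e e = e -> Sc_hat e.
Proof.
  intros He Hee. split; [apply He|]. intros A Asc. apply uf_notE; [apply He|].
  intro eA. assert (eA2 : uprod e e A) by (rewrite Hee; exact eA). apply (idem_nonsc He Hee (free_ufree He) eA2 Asc).
Qed.

Lemma Sc_nonsc p A : Sc_hat p -> p A -> ~ scattered A.
Proof. intros [Hp H] pA Asc. exact (uf_not Hp pA (H A Asc)). Qed.

Lemma free_trans g p : free p -> free (utrans g p).
Proof.
  intros [Hp Hf]. split; [apply trans_uf; auto|]. intros A HA [L HL].
  rewrite transE in HA; [|apply uf_up; auto]. apply (Hf _ HA).
  exists (map (fun z => inv g ** z) L). intros y Hy. apply HL in Hy.
  replace y with (inv g ** (g ** y)) by apply mul_VK. apply in_map; auto.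
Qed.

Lemma mul_VrK a x : a ** x ** inv x = a.
Proof. rewrite <- gmul_assoc, mul_V_r, mul_1r. reflexivity. Qed.

Lemma scat_trans x A : scattered A -> scattered (fun z => A (x ** z)).
Proof.
  intros Hsc X XA Xinf.
  set (X' := fun w => exists z, X z /\ w = x ** z).
  destruct (Hsc X') as [p [[Hp pX'] [L HL]]].
  - intros w [z [Xz ->]]. apply XA; auto.
  - intros [L HL]. apply Xinf. exists (map (fun w => inv x ** w) L).
    intros z Xz. replace z with (inv x ** (x ** z)) by apply mul_VK.
    apply in_map, HL. exists z; auto.
  - assert (Hpu : ultrafilter p) by apply Hp.
    exists (utrans (inv x) p). split; [split|].
    + apply free_trans; auto.
    + rewrite transE; [|apply uf_up; auto]. apply (uf_upE Hpu pX').
      intros w [z [Xz ->]]. rewrite mul_VK; auto.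
    + exists (map (fun h => inv x ** h ** x) L). intros g Hg.
      rewrite trans_trans in Hg; auto.
      assert (Hg' : utrans (x ** g ** inv x) p X').
      { rewrite transE in *; try (apply uf_up; auto).
        apply (uf_upE Hpu Hg). intros w Xw. exists (g ** inv x ** w). split; auto.
        rewrite !gmul_assoc. reflexivity. }
      destruct (HL _ Hg') as [h [Lh E]]. apply ueq_eq in E.
      exists (inv x ** h ** x). split; [apply (in_map (fun h => inv x ** h ** x)); auto|].
      intro S. rewrite !trans_trans; auto. rewrite mul_VrK.
      replace (g ** inv x) with (inv x ** (x ** g ** inv x))
        by (rewrite <- !gmul_assoc, mul_VK; reflexivity).
      rewrite <- (trans_trans (inv x) (x ** g ** inv x)), <- (trans_trans (inv x) h), E by auto; tauto.
Qed.

End S.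

Theorem theorem6p8 (G : Group) (HG : infinite_group G) :
  (* (i) *)
  (forall p : ufam G, ultrafilter p ->
     (Sc_hat (G:=G) p <-> ucl (@idem_translates G) p)) /\
  (* (ii) *)
  uideal (@Sc_hat G) /\
  (forall p : ufam G, ultrafilter p ->
     (Sc_hat (G:=G) p <-> forall A, p A -> contains_psFP A)) /\
  (* (iii) *)
  (uclosed (@Sc_hat G) /\
   (forall e, free e -> idempotent e -> Sc_hat (G:=G) e) /\
   (forall I : ufam G -> Prop, uclosed I -> uideal I ->
      (forall e, free e -> idempotent e -> I e) ->
      forall p, Sc_hat (G:=G) p -> I p)).
Proof.
  assert (Part1 : forall p : ufam G, ultrafilter p ->
     (Sc_hat (G:=G) p <-> ucl (@idem_translates G) p)).
  { intros p Hp. split.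
    - intros HS. split; auto. intros A pA.
      destruct (nonsc_idem (Sc_nonsc HS pA)) as [e [y [He [Hee [Hy HA]]]]].
      exists (uprod e y). split; auto. exists e, y. split; auto. split.
      + unfold idempotent; rewrite Hee. intro; tauto.
      + split; auto. intro; tauto.
    - intros [_ H]. split; auto. intros A Asc. apply uf_notE; auto. intro pA.
      destruct (H A pA) as [q [[e [y [He [Hee [Hy E]]]]] qA]].
      apply ueq_eq in E; apply ueq_eq in Hee. subst q.
      exact (idem_nonsc He Hee Hy qA Asc). }
  split; [exact Part1|].
  split.
  { split; [intros p [h _]; exact h|]. split.
    - destruct (@free_exists G (fun _ => True)) as [u [Hu _]].
      + intros [L HL]. apply HG. exists L. intro x; apply HL; auto.
      + destruct (@ellis G (@free G)) as [e [He Hee]].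
        * exists u; auto.
        * apply closed_free.
        * intros p q Hp Hq. apply prod_free; auto. apply Hp.
        * exists e. apply Sc_of_idem; auto.
    - intros p q Hp Hq. assert (Hpu : ultrafilter p) by apply Hp. split.
      + split; [apply prod_uf; auto|]. intros A Asc.
        apply uf_notE; [apply prod_uf; auto|]. intro HA.
        rewrite prodE in HA; try (apply uf_up; auto).
        destruct (nonsc_idem (Sc_nonsc Hp HA)) as [e [y [He [Hee [Hy HB]]]]].
        assert (H1 : uprod (uprod e y) q A).
        { rewrite prodE; try (apply uf_up; auto; apply prod_uf; auto; apply He). exact HB. }
        rewrite prod_assoc in H1; auto; [|apply He].
        exact (idem_nonsc He Hee (prod_uf Hy Hq) H1 Asc).
      + split; [apply prod_uf; auto|]. intros A Asc.
        apply uf_notE; [apply prod_uf; auto|]. intro HA.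
        rewrite prodE in HA; try (apply uf_up; auto).
        destruct (uf_nonempty Hq HA) as [x Hx].
        exact (Sc_nonsc Hp Hx (scat_trans (x:=x) Asc)). }
  split.
  { intros p Hp. split.
    - intros HS A pA. destruct (nonsc_idem (Sc_nonsc HS pA)) as [e [y [He [Hee [Hy HA]]]]].
      exact (GG_psFP He Hee Hy HA).
    - intros H. split; auto. intros A Asc. apply uf_notE; auto. intro pA.
      destruct (H A pA) as [g [b [Hg Hsub]]]. exact (psFP_not_scattered Hg Hsub Asc). }
  split; [|split].
  - split; [intros p [h _]; exact h|]. intros p [Hp Hcl]. split; auto.
    intros A Asc. apply uf_notE; auto. intro pA.
    destruct (Hcl A pA) as [q [Hq qA]]. exact (Sc_nonsc Hq qA Asc).
  - intros e He Hid. apply ueq_eq in Hid. apply Sc_of_idem; auto.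
  - intros I HIc HIi HIe p Hp. apply (proj2 HIc).
    assert (Hpu : ultrafilter p) by apply Hp.
    apply (ucl_mono (C := @idem_translates G)); [|apply Part1; auto].
    intros q [e [y [He [Hid [Hy E]]]]]. apply ueq_eq in E. subst q.
    apply (proj2 (proj2 HIi) e y); auto.
Qed.
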